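(* Let $(Y_i,u_i)$, $i\in I$, be ultrametric spaces whose value sets $u_iY_i$ are all contained in a common totally ordered set, and assume that $I$ is finite or that $\bigcup_{i\in I}u_iY_i$ is well ordered. Equip $\prod_{i\in I}Y_i$ with $u((y_i)_{i\in I},(z_i)_{i\in I}):=\min_{i\in I}u_i(y_i,z_i)$. If every $(Y_i,u_i)$ is spherically complete, then so is the direct product $(\prod_{i\in I}Y_i,u)$.
   Context: An ultrametric space $(Y,u)$ is a set with a map $u$ from $Y\times Y$ onto a totally ordered set $\Gamma$ with last element $\infty$ such that $u(y,z)=\infty$ iff $y=z$, $u(y,z)\ge\min\{u(y,x),u(x,z)\}$ and $u(y,z)=u(z,y)$; its value set is $uY=\Gamma\setminus\{\infty\}$. Closed balls are $B_\alpha(y)=\{z:u(y,z)\ge\alpha\}$; a ball is a union of a non-empty collection of closed balls with a common element; a nest of balls is a set of balls totally ordered by inclusion; the space is spherically complete if every nest of balls has non-empty intersection. The map $u$ on the product is an ultrametric with values in $\bigcup_i u_iY_i\cup\{\infty\}$. *)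

(* Defs.v *)
From mathcomp Require Import all_boot all_order.
Set Implicit Arguments. Unset Strict Implicit. Unset Printing Implicit Defensive.
Import Order.TTheory.
Local Open Scope order_scope.

Section Ultra.
Variables (d : Order.disp_t) (G : tOrderType d).

(* Ultrametric on Y with values in the totally ordered set G whose last
   element \top plays the role of infinity. *)
Definition is_ultrametric (Y : Type) (u : Y -> Y -> G) : Prop :=
  (forall y z, u y z = \top <-> y = z) /\
  (forall x y z, Order.min (u y x) (u x z) <= u y z) /\
  (forall y z, u y z = u z y).

Definition closed_ball (Y : Type) (u : Y -> Y -> G) (a : G) (y : Y) : Y -> Prop :=
  fun z => a <= u y z.

Definition is_ball (Y : Type) (u : Y -> Y -> G) (B : Y -> Prop) : Prop :=
  exists C : (Y -> Prop) -> Prop,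
    (exists b, C b) /\
    (forall b, C b -> exists a y, b = closed_ball u a y) /\
    (exists x, forall b, C b -> b x) /\
    (forall z, B z <-> exists b, C b /\ b z).

Definition is_nest (Y : Type) (u : Y -> Y -> G) (N : (Y -> Prop) -> Prop) : Prop :=
  (exists B, N B) /\
  (forall B, N B -> is_ball u B) /\
  (forall B1 B2, N B1 -> N B2 ->
     (forall z, B1 z -> B2 z) \/ (forall z, B2 z -> B1 z)).

Definition spherically_complete (Y : Type) (u : Y -> Y -> G) : Prop :=
  forall N, is_nest u N -> exists y, forall B, N B -> B y.

Definition union_value_set (I : Type) (Y : I -> Type)
  (u : forall i, Y i -> Y i -> G) : G -> Prop :=
  fun a => exists i (y z : Y i), y <> z /\ u i y z = a.

Definition well_ordered_subset (S : G -> Prop) : Prop :=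
  forall T : G -> Prop, (forall a, T a -> S a) -> (exists a, T a) ->
    exists m, T m /\ forall a, T a -> m <= a.

(* up y z is the minimum of {u_i (y i) (z i) | i in I} (= \top if I is empty) *)
Definition is_product_min (I : Type) (Y : I -> Type)
  (u : forall i, Y i -> Y i -> G)
  (up : (forall i, Y i) -> (forall i, Y i) -> G) : Prop :=
  forall y z,
    (up y z = \top \/ exists i, up y z = u i (y i) (z i)) /\
    (forall i, up y z <= u i (y i) (z i)).

End Ultra.

(* Main.v *)
Require Import Defs.
From Stdlib Require List.
From Stdlib Require Import ClassicalEpsilon Eqdep.
From mathcomp Require Import all_boot all_order.
Import Order.TTheory.
Local Open Scope order_scope.

Lemma ultra_le (d : Order.disp_t) (G : tOrderType d) (Y : Type) (u : Y -> Y -> G)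
  (Hu : is_ultrametric u) a x y z :
  a <= u y x -> a <= u x z -> a <= u y z.
Proof.
case: Hu => _ [Ht _] h1 h2.
apply: le_trans (Ht x y z). by rewrite le_min h1 h2.
Qed.

Lemma ultra_sym (d : Order.disp_t) (G : tOrderType d) (Y : Type) (u : Y -> Y -> G)
  (Hu : is_ultrametric u) y z : u y z = u z y.
Proof. by case: Hu => _ [_ ->]. Qed.

Lemma up_ball (d : Order.disp_t) (G : tOrderType d)
  (I : Type) (Y : I -> Type) (u : forall i, Y i -> Y i -> G)
  (up : (forall i, Y i) -> (forall i, Y i) -> G) :
  is_product_min u up -> forall a v w,
  (a <= up v w) <-> (forall i, a <= u i (v i) (w i)).
Proof.
move=> Hm a v w; case: (Hm v w) => [[E|[j E]] Hle]; split.
- by move=> h i; apply: le_trans h (Hle i).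
- by move=> _; rewrite E lex1.
- by move=> h i; apply: le_trans h (Hle i).
- by move=> h; rewrite E.
Qed.
Arguments up_ball {d G I Y u up}.
Arguments ultra_le {d G Y u}.
Arguments ultra_sym {d G Y u}.

Theorem proposition10 (d : Order.disp_t) (G : tOrderType d)
  (I : Type) (Y : I -> Type) (u : forall i, Y i -> Y i -> G)
  (up : (forall i, Y i) -> (forall i, Y i) -> G) :
  (forall i, is_ultrametric (u i)) ->
  ((exists s : seq I, forall i, List.In i s) \/
   well_ordered_subset (union_value_set u)) ->
  is_product_min u up ->
  (forall i, spherically_complete (u i)) ->
  spherically_complete up.
Proof.
move=> Hu _ Hm Hsc N [[B0 NB0] [Nball Nlin]].
pose P := fun i (B : (forall i, Y i) -> Prop) (w : Y i) => exists z, B z /\ z i = w.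
have Hy : forall i, exists yi, forall B, N B -> P i B yi.
  move=> i.
  have : exists yi, forall S, (exists B, N B /\ forall w, S w <-> P i B w) -> S yi.
    apply: (Hsc i); split; first by exists (P i B0); exists B0; split.
    split.
    - move=> S [B [NB HS]].
      have [C [[b0 Cb0] [Ccl [[x Hx] HB]]]] := Nball B NB.
      exists (fun b' => exists a y0, C (closed_ball up a y0) /\
                 b' = closed_ball (u i) a (y0 i)).
      split.
        have [a [y0 E]] := Ccl b0 Cb0; subst b0.
        by exists (closed_ball (u i) a (y0 i)); exists a, y0.
      split; first by move=> b [a [y0 [_ ->]]]; exists a, (y0 i).
      split.
        exists (x i) => b [a [y0 [Cb ->]]].
        have := Hx _ Cb; rewrite /closed_ball => /(up_ball Hm) h; exact: h.
      move=> w; rewrite HS; split.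
      + move=> [z [Bz <-]].
        have [b [Cb bz]] := (proj1 (HB z)) Bz.
        have [a [y0 E]] := Ccl b Cb; subst b.
        exists (closed_ball (u i) a (y0 i)); split; first by exists a, y0.
        move: bz; rewrite /closed_ball => /(up_ball Hm) h; exact: h.
      + move=> [b' [[a [y0 [Cb ->]]] hw]].
        pose z := fun j => match excluded_middle_informative (i = j) with
                  | left e => eq_rect i Y w j e | right _ => x j end.
        exists z; split.
          apply/(proj2 (HB z)); exists (closed_ball up a y0); split => //.
          apply/(up_ball Hm) => k; rewrite /z.
          case: (excluded_middle_informative (i = k)) => [e|ne].
            by subst k.
          have := Hx _ Cb; rewrite /closed_ball => /(up_ball Hm) h; exact: h.
        rewrite /z; case: (excluded_middle_informative (i = i)) => [e|ne] //.
        by rewrite (UIP_refl _ _ e).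
    - move=> S1 S2 [B1 [N1 H1]] [B2 [N2 H2]].
      case: (Nlin B1 B2 N1 N2) => hs; [left|right] => w.
      + by rewrite H1 H2 => -[z [Bz <-]]; exists z; split => //; apply: hs.
      + by rewrite H1 H2 => -[z [Bz <-]]; exists z; split => //; apply: hs.
  move=> [yi Hyi]; exists yi => B NB; apply/(Hyi (P i B)); by exists B; split.
pose y := fun i => proj1_sig (constructive_indefinite_description _ (Hy i)).
have Py : forall i B, N B -> P i B (y i).
  by move=> i; rewrite /y; case: (constructive_indefinite_description _ _).
exists y => B NB.
have [C [[b0 Cb0] [Ccl [[x Hx] HB]]]] := Nball B NB.
apply/(proj2 (HB y)).
have Hi : forall i, exists a y0, C (closed_ball up a y0) /\ a <= u i (x i) (y i).
  move=> i; have [z [Bz zi]] := Py i B NB.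
  have [b [Cb bz]] := (proj1 (HB z)) Bz.
  have [a [y0 E]] := Ccl b Cb; subst b.
  exists a, y0; split => //.
  have h1 := proj1 (up_ball Hm _ _ _) bz i.
  have h2 := proj1 (up_ball Hm _ _ _) (Hx _ Cb) i.
  rewrite -zi; apply: (ultra_le (Hu i) _ (y0 i)) => //.
  by rewrite (ultra_sym (Hu i)).
case: (Hm x y) => [[E|[j E]] Hle].
- have [a [y0 E0]] := Ccl b0 Cb0; subst b0.
  exists (closed_ball up a y0); split => //.
  apply/(up_ball Hm) => k.
  have h2 := proj1 (up_ball Hm _ _ _) (Hx _ Cb0) k.
  apply: (ultra_le (Hu k) _ _ _ _ h2).
  by have := Hle k; rewrite E => h; apply: le_trans h.
- have [a [y0 [Cb ha]]] := Hi j.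
  exists (closed_ball up a y0); split => //.
  apply/(up_ball Hm) => k.
  have h2 := proj1 (up_ball Hm _ _ _) (Hx _ Cb) k.
  apply: (ultra_le (Hu k) _ _ _ _ h2).
  apply: le_trans ha _; rewrite -E; exact: Hle.
Qed.
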